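(* Let $d\ge2$ and let $\rho_{DS}$ be a diagonal symmetric state on $(\mathbb{C}^d)^{\otimes 4}$. If the partial transpose of $\rho_{DS}$ with respect to the bipartition of the four parties into two pairs ($2:2$) is positive semidefinite, then $\rho_{DS}$ is PPT, i.e. its partial transpose with respect to every bipartition of the four parties is positive semidefinite.
   Context: For $N=4$ parties and local dimension $d$, Dicke states are $|D_{\mathbf k}\rangle=\binom{4}{\mathbf k}^{-1/2}\sum_{\pi}\pi\big(|0\rangle^{\otimes k_0}\otimes\cdots\otimes|d-1\rangle^{\otimes k_{d-1}}\big)$, where $\mathbf k=(k_0,\dots,k_{d-1})$, $k_i\ge0$, $\sum k_i=4$, the sum runs over distinct permutations of the tensor factors and $\binom{4}{\mathbf k}=\frac{4!}{k_0!\cdots k_{d-1}!}$. A diagonal symmetric state is a convex mixture $\sum_{\mathbf k}p_{\mathbf k}|D_{\mathbf k}\rangle\langle D_{\mathbf k}|$ with $p_{\mathbf k}\ge0$, $\sum p_{\mathbf k}=1$. By permutation symmetry the relevant bipartitions are $1:3$ and $2:2$. *)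

(* Defs.v *)
From HB Require Import structures.
From mathcomp Require Import all_boot all_order all_algebra.
Set Implicit Arguments. Unset Strict Implicit. Unset Printing Implicit Defensive.
Import Order.TTheory GRing.Theory Num.Theory Num.Def.
Local Open Scope ring_scope.

(* Computational basis of (C^d)^{⊗4}: words x : 'I_4 -> 'I_d. *)
Definition basis4 (d : nat) := {ffun 'I_4 -> 'I_d}.

(* Operators on (C^d)^{⊗4}, as square matrices indexed (via enum_rank)
   by the computational basis. *)
Notation op C d := 'M[C]_(#|{ffun 'I_4 -> 'I_d}|).
Notation ket C d := 'cV[C]_(#|{ffun 'I_4 -> 'I_d}|).

Definition psdmx (C : numClosedFieldType) (n : nat) (A : 'M[C]_n) : Prop :=
  forall v : 'cV[C]_n, 0 <= ((map_mx conjC v)^T *m A *m v) 0 0.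

(* occupation vectors k = (k_0,...,k_{d-1}), k_i >= 0, sum k_i = 4 *)
Definition occ (d : nat) := {ffun 'I_d -> 'I_5}.
Definition valid_occ d (k : occ d) : bool := (\sum_(i < d) (k i : nat) == 4)%N.

Definition multinom d (k : occ d) : nat :=
  (4`! %/ \prod_(i < d) (k i : nat)`!)%N.

(* x is a distinct rearrangement of |0>^{k_0} ... |d-1>^{k_{d-1}}
   iff letter i occurs exactly k_i times in x *)
Definition has_occ d (k : occ d) (x : basis4 d) : bool :=
  [forall i : 'I_d, #|[pred j : 'I_4 | x j == i]| == (k i : nat)].

Definition dicke (C : numClosedFieldType) d (k : occ d) : ket C d :=
  \col_(r < #|{ffun 'I_4 -> 'I_d}|)
     (if has_occ k (enum_val r : basis4 d) then (sqrtC ((multinom k)%:R : C))^-1 else 0).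

Definition diag_sym_state (C : numClosedFieldType) d (p : occ d -> C) : op C d :=
  \sum_(k : occ d | valid_occ k)
     p k *: (dicke C k *m (map_mx conjC (dicke C k))^T).

(* partial transpose with respect to the parties in S:
   <x| M^{T_S} |y> = <x'| M |y'>, where x' (resp. y') agrees with x (resp. y)
   outside S and with y (resp. x) on S *)
Definition ptranspose (C : numClosedFieldType) d (S : {set 'I_4}) (M : op C d)
  : op C d :=
  \matrix_(r, s)
    let x : basis4 d := enum_val r in let y : basis4 d := enum_val s in
    M (enum_rank ([ffun a => if a \in S then y a else x a] : basis4 d))
      (enum_rank ([ffun a => if a \in S then x a else y a] : basis4 d)).

(* Main.v *)
Require Import Defs.
From HB Require Import structures.
From mathcomp Require Import all_boot all_order all_algebra all_fingroup.
From mathcomp Require Import zify.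
Import Order.TTheory GRing.Theory Num.Theory Num.Def.
Set Implicit Arguments. Unset Strict Implicit. Unset Printing Implicit Defensive.
Local Open Scope ring_scope.

Section Gen.
Variable C : numClosedFieldType.
Variable d : nat.
Local Notation W := (basis4 d).

Definition qform (K : W -> W -> C) (v : W -> C) :=
  \sum_(x : W) \sum_(y : W) (v x)^* * v y * K x y.

Definition kerM (M : op C d) : W -> W -> C :=
  fun x y => M (enum_rank x) (enum_rank y).

Lemma psd_formE (M : op C d) :
  psdmx M <-> forall v : W -> C, 0 <= qform (kerM M) v.
Proof.
have E : forall v : 'cV[C]_(#|W|), ((map_mx conjC v)^T *m M *m v) 0 0 =
   qform (kerM M) (fun x => v (enum_rank x) 0).
  move=> v; rewrite mxE /qform [RHS]exchange_big /=.
  rewrite (reindex (@enum_rank W)) /=; last first.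
    by exists enum_val => i _; rewrite ?enum_valK ?enum_rankK.
  apply: eq_bigr => y _.
  rewrite !mxE mulr_suml (reindex (@enum_rank W)) /=; last first.
    by exists enum_val => i _; rewrite ?enum_valK ?enum_rankK.
  apply: eq_bigr => x _.
  by rewrite !mxE /kerM mulrAC.
split=> [H v | H v].
  have := H (\col_i v (enum_val i)).
  rewrite E; congr (0 <= _); apply: eq_bigr => x _; apply: eq_bigr => y _.
  by rewrite !mxE !enum_rankK.
by rewrite E.
Qed.
End Gen.

Definition i0 : 'I_4 := @Ordinal 4 0 isT.
Definition i1 : 'I_4 := @Ordinal 4 1 isT.
Definition i2 : 'I_4 := @Ordinal 4 2 isT.
Definition i3 : 'I_4 := @Ordinal 4 3 isT.

Section Gen2.
Variable C : numClosedFieldType.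
Variable d : nat.
Local Notation W := (basis4 d).

Definition wseq (x : W) : seq 'I_d := [:: x i0; x i1; x i2; x i3].

Lemma card_wseq (x : W) i : #|[pred j : 'I_4 | x j == i]| = count_mem i (wseq x).
Proof.
rewrite -sum1_card big_mkcond /= !big_ord_recl big_ord0 /=.
rewrite /wseq /= addn0.
have -> : lift ord0 (ord0 : 'I_3) = i1 by apply: val_inj.
have -> : lift ord0 (lift ord0 (ord0 : 'I_2)) = i2 by apply: val_inj.
have -> : lift ord0 (lift ord0 (lift ord0 (ord0 : 'I_1))) = i3 by apply: val_inj.
have -> : (ord0 : 'I_4) = i0 by apply: val_inj.
by rewrite !inE; do 4 case: (_ == i).
Qed.

Lemma has_occE (k : occ d) (x : W) :
  has_occ k x = [forall i, count_mem i (wseq x) == k i].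
Proof. by apply: eq_forallb => i; rewrite card_wseq. Qed.

Lemma has_occ_perm (k : occ d) (x y : W) :
  perm_eq (wseq x) (wseq y) -> has_occ k x = has_occ k y.
Proof.
move=> /seq.permP H; rewrite !has_occE; apply: eq_forallb => i.
by rewrite H.
Qed.

Lemma has_occ_2 (k : occ d) (x y : W) :
  has_occ k x -> has_occ k y -> perm_eq (wseq x) (wseq y).
Proof.
rewrite !has_occE => /forallP Hx /forallP Hy.
apply/allP => i _; apply/eqP.
by rewrite (eqP (Hx i)) (eqP (Hy i)).
Qed.

Variable p : occ d -> C.
Hypothesis p_ge0 : forall k, valid_occ k -> 0 <= p k.

Definition R := kerM (@diag_sym_state C d p).

Definition ck (k : occ d) (x : W) : C :=
  if has_occ k x then (sqrtC ((multinom k)%:R : C))^-1 else 0.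

Lemma RE x y : R x y = \sum_(k : occ d | valid_occ k) p k * (ck k x * (ck k y)^*).
Proof.
rewrite /R /kerM /diag_sym_state summxE; apply: eq_bigr => k _.
rewrite !mxE big_ord1 !mxE !enum_rankK /ck.
by case: (has_occ k x); case: (has_occ k y).
Qed.

Definition Qw x := R x x.

Lemma Qw_ge0 x : 0 <= Qw x.
Proof.
rewrite /Qw RE; apply: sumr_ge0 => k vk.
by apply: mulr_ge0; [exact: p_ge0 | exact: mul_conjC_ge0].
Qed.

Lemma Qw_perm x y : perm_eq (wseq x) (wseq y) -> Qw x = Qw y.
Proof.
move=> H; rewrite /Qw !RE; apply: eq_bigr => k _.
by rewrite /ck (has_occ_perm k H).
Qed.

Lemma R_eq x y : R x y = if perm_eq (wseq x) (wseq y) then Qw x else 0.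
Proof.
case: ifP => H.
  rewrite /Qw !RE; apply: eq_bigr => k _.
  by rewrite /ck (has_occ_perm k H).
rewrite RE big1 // => k _; rewrite /ck.
case Hx: (has_occ k x); case Hy: (has_occ k y); rewrite ?rmorph0 ?mul0r ?mulr0 //.
by rewrite (has_occ_2 Hx Hy) in H.
Qed.

End Gen2.

Section Gen3.
Variable C : numClosedFieldType.
Variable d : nat.
Local Notation W := (basis4 d).
Variable p : occ d -> C.

Definition ptw (T : {set 'I_4}) (x y : W) : W :=
  [ffun a => if a \in T then y a else x a].

Definition PTk T (x y : W) : C := R p (ptw T x y) (ptw T y x).

Lemma kerM_pt T x y : kerM (ptranspose T (diag_sym_state p)) x y = PTk T x y.
Proof. by rewrite /kerM /PTk /R /kerM mxE !enum_rankK. Qed.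

Definition psdk (K : W -> W -> C) := forall v, 0 <= qform K v.

Lemma psd_pt T : psdmx (ptranspose T (diag_sym_state p)) <-> psdk (PTk T).
Proof.
have E : forall v, qform (kerM (ptranspose T (diag_sym_state p))) v = qform (PTk T) v.
  move=> v; apply: eq_bigr => x _; apply: eq_bigr => y _; by rewrite kerM_pt.
split=> H.
  by move=> v; rewrite -E; move/psd_formE: H; apply.
by apply/psd_formE => v; rewrite E.
Qed.

Lemma psd_compl T : psdk (PTk T) -> psdk (PTk (~: T)).
Proof.
move=> H v; have := H (fun x => (v x)^*).
have E : forall x y, ptw (~: T) x y = ptw T y x.
  by move=> x y; apply/ffunP => a; rewrite !ffunE inE; case: (a \in T).
rewrite /qform exchange_big /=; congr (0 <= _).
apply: eq_bigr => y _; apply: eq_bigr => x _.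
by rewrite /PTk !E conjCK [v x * _]mulrC.
Qed.

Definition cw (pi : {perm 'I_4}) (x : W) : W := [ffun a => x (pi a)].

Lemma cw_perm pi x : perm_eq (wseq (cw pi x)) (wseq x).
Proof.
apply/allP => i _; apply/eqP; rewrite -!card_wseq -!sum1_card.
rewrite [RHS](reindex_inj (@perm_inj _ pi)) /=.
by apply: eq_bigl => j; rewrite !inE ffunE.
Qed.

Lemma R_cw pi x y : R p (cw pi x) (cw pi y) = R p x y.
Proof.
rewrite !R_eq (Qw_perm p (cw_perm pi x)).
have H1 := cw_perm pi x; have H2 := cw_perm pi y.
by rewrite (permPl H1) (permPr H2).
Qed.

Lemma cw_inj pi : injective (cw pi).
Proof.
move=> x y E; apply/ffunP => a.
have := congr1 (fun f : W => f ((pi^-1)%g a)) E; rewrite /= !ffunE.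
by rewrite permKV.
Qed.

Lemma cwK pi x : cw (pi^-1)%g (cw pi x) = x.
Proof. by apply/ffunP => a; rewrite !ffunE permKV. Qed.

Lemma psd_perm (pi : {perm 'I_4}) (T T' : {set 'I_4}) :
  (forall a, (pi a \in T') = (a \in T)) -> psdk (PTk T) -> psdk (PTk T').
Proof.
move=> HT H v; have := H (fun u => v (cw (pi^-1)%g u)).
rewrite /qform (reindex_inj (@cw_inj pi)) /=; congr (0 <= _).
apply: eq_bigr => x _.
rewrite (reindex_inj (@cw_inj pi)) /=; apply: eq_bigr => y _.
rewrite !cwK; congr (_ * _).
have E : forall u w, ptw T (cw pi u) (cw pi w) = cw pi (ptw T' u w).
  by move=> u w; apply/ffunP => a; rewrite !ffunE HT.
by rewrite /PTk !E R_cw.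
Qed.

End Gen3.

Section Gen4.
Variable C : numClosedFieldType.
Variable d : nat.
Local Notation W := (basis4 d).
Variable p : occ d -> C.
Hypothesis p_ge0 : forall k, valid_occ k -> 0 <= p k.

Definition mkw (a c s t : 'I_d) : W := [ffun j : 'I_4 => nth a [:: a; c; s; t] j].

Lemma wseq_mkw a c s t : wseq (mkw a c s t) = [:: a; c; s; t].
Proof. by rewrite /wseq !ffunE. Qed.

Lemma wseq_ptw2 (x y : W) : wseq (ptw [set i0; i1] x y) = [:: y i0; y i1; x i2; x i3].
Proof. by rewrite /wseq !ffunE !inE. Qed.

Lemma wseq_ptw1 (x y : W) : wseq (ptw [set i0] x y) = [:: y i0; x i1; x i2; x i3].
Proof. by rewrite /wseq !ffunE !inE. Qed.

Lemma sum_delta (g : 'I_d -> W) (w : 'I_d -> C) (F : W -> C) :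
  \sum_(z : W) (\sum_a (z == g a)%:R * w a) * F z = \sum_a w a * F (g a).
Proof.
under eq_bigr => z _ do rewrite mulr_suml.
rewrite exchange_big /=.
apply: eq_bigr => a _; rewrite (bigD1 (g a)) //= eqxx mul1r big1 ?addr0 //.
by move=> z /negbTE ->; rewrite mul0r mul0r.
Qed.

Lemma psd22 : psdk (PTk p [set i0; i1]) ->
  forall (s t : 'I_d) (w : 'I_d -> C),
  0 <= \sum_a \sum_c (w a)^* * w c * Qw p (mkw a c s t).
Proof.
move=> H s t w.
pose g a := mkw a t a s.
have := H (fun z => \sum_a (z == g a)%:R * w a).
rewrite /qform.
have E1 : forall x : W, (\sum_a (x == g a)%:R * w a)^* = \sum_a (x == g a)%:R * (w a)^*.
  by move=> x; rewrite rmorph_sum; apply: eq_bigr => a _; rewrite rmorphM rmorph_nat.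
under eq_bigr => x _ do under eq_bigr => y _ do rewrite -mulrA.
under eq_bigr => x _ do rewrite -mulr_sumr (sum_delta g w) E1.
rewrite sum_delta.
congr (0 <= _); apply: eq_bigr => a _; rewrite mulr_sumr; apply: eq_bigr => c _.
rewrite mulrA; congr (_ * _).
rewrite /PTk R_eq !wseq_ptw2 /g !ffunE /=.
have P1 : perm_eq [:: c; t; a; s] [:: a; t; c; s].
  by apply/seq.permP => P /=; lia.
rewrite P1; apply: Qw_perm; rewrite wseq_ptw2 wseq_mkw !ffunE /=.
by apply/seq.permP => P /=; lia.
Qed.

End Gen4.

Section Gen5.
Variable d : nat.
Local Arguments rem : simpl never.
Local Notation W := (basis4 d).

Definition cnt (s : seq 'I_d) : {ffun 'I_d -> 'I_5} := [ffun i => inord (count_mem i s)].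

Lemma cnt_eq s t : (size s <= 4)%N -> (size t <= 4)%N -> (cnt s == cnt t) = perm_eq s t.
Proof.
move=> Hs Ht; apply/eqP/idP => [E | /seq.permP E].
  apply/allP => i _; apply/eqP.
  have := congr1 (fun f : {ffun 'I_d -> 'I_5} => val (f i)) E; rewrite /= !ffunE !inordK //.
    by apply: (leq_ltn_trans (count_size _ _)).
  by apply: (leq_ltn_trans (count_size _ _)).
by apply/ffunP => i; rewrite !ffunE E.
Qed.

Definition Xw (x : W) : seq 'I_d := [:: x i1; x i2; x i3].

Definition lab (x : W) : option 'I_d * {ffun 'I_d -> 'I_5} :=
  if x i0 \in Xw x then (None, cnt (rem (x i0) (Xw x))) else (Some (x i0), cnt (Xw x)).

Lemma size_rem_le (a : 'I_d) s : (size (rem a s) <= size s)%N.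
Proof. exact/size_subseq/rem_subseq. Qed.

Lemma perm_swap2 (a b : 'I_d) s : perm_eq (a :: b :: s) (b :: a :: s).
Proof. exact: (permEl (@perm_catCA _ [:: a] [:: b] s)). Qed.

Lemma lab_eq x y : (lab x == lab y) = perm_eq (y i0 :: Xw x) (x i0 :: Xw y).
Proof.
rewrite /lab; set a := x i0; set c := y i0; set X := Xw x; set Y := Xw y.
have sX : size X = 3%N by [].
have sY : size Y = 3%N by [].
case: ifP => Ha; case: ifP => Hc; rewrite xpair_eqE /=.
- rewrite cnt_eq; last 2 first.
  + by rewrite (leq_trans (size_rem_le _ _)) ?sX.
  + by rewrite (leq_trans (size_rem_le _ _)) ?sY.
  have PX := perm_to_rem Ha; have PY := perm_to_rem Hc.
  have PX' : perm_eq (c :: X) (c :: a :: rem a X) by rewrite perm_cons.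
  have PY' : perm_eq (a :: Y) (a :: c :: rem c Y) by rewrite perm_cons.
  by rewrite (permPl PX') (permPr PY') (permPr (perm_swap2 _ _ _)) !perm_cons.
- symmetry; apply/negbTE/negP => P.
  have : c \in a :: Y by rewrite -(perm_mem P) mem_head.
  rewrite inE Hc orbF => /eqP Eca.
  move: P; rewrite Eca perm_cons => /perm_mem P.
  by move: Hc; rewrite Eca -P Ha.
- symmetry; apply/negbTE/negP => P.
  have : a \in c :: X by rewrite (perm_mem P) mem_head.
  rewrite inE Ha orbF => /eqP Eac.
  move: P; rewrite Eac perm_cons => /perm_mem P.
  by move: Ha; rewrite Eac P Hc.
- rewrite cnt_eq ?sX ?sY //.
  case: (eqVneq a c) => [<- | Nac]; first by rewrite eqxx perm_cons.
  have -> : (Some a == Some c) = false.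
    by apply/eqP; case=> E; rewrite E eqxx in Nac.
  rewrite andFb; symmetry; apply/negbTE/negP => P.
  have : a \in c :: X by rewrite (perm_mem P) mem_head.
  by rewrite inE Ha orbF (negbTE Nac).
Qed.

Lemma labS x a m : lab x == (Some a, m) ->
  [/\ x i0 = a, x i0 \notin Xw x & cnt (Xw x) = m].
Proof.
rewrite /lab; case: ifP => H; rewrite xpair_eqE //= => /andP[/eqP E1 /eqP E2].
by split=> //; case: E1.
Qed.

Lemma labN x m : lab x == (None, m) ->
  x i0 \in Xw x /\ cnt (rem (x i0) (Xw x)) = m.
Proof.
rewrite /lab; case: ifP => H; rewrite xpair_eqE //= => /eqP E2.
by [].
Qed.

End Gen5.

Section Main.
Variable C : numClosedFieldType.
Variable d : nat.
Local Notation W := (basis4 d).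
Variable p : occ d -> C.
Hypothesis p_ge0 : forall k, valid_occ k -> 0 <= p k.
Local Arguments rem : simpl never.

Lemma part_lin (P : pred W) (f : W -> 'I_d) (u : W -> C) (F : 'I_d -> C) :
  \sum_(x | P x) u x * F (f x) = \sum_a (\sum_(x | P x && (f x == a)) u x) * F a.
Proof.
rewrite (partition_big f predT) //=; apply: eq_bigr => a _.
by rewrite mulr_suml; apply: eq_bigr => x /andP[_ /eqP ->].
Qed.

Lemma PT1E x y : PTk p [set i0] x y =
  if lab x == lab y then Qw p (ptw [set i0] x y) else 0.
Proof. by rewrite /PTk R_eq !wseq_ptw1 lab_eq. Qed.

Lemma psd13 : psdk (PTk p [set i0; i1]) -> psdk (PTk p [set i0]).
Proof.
move=> H22 v; rewrite /qform.
under eq_bigr => x _ do under eq_bigr => y _ do rewrite PT1E (fun_if (fun e => _ * e)) mulr0.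
under eq_bigr => x _ do rewrite -big_mkcond /=.
rewrite (partition_big (@lab d) predT) //=.
apply: sumr_ge0 => l _.
have E : \sum_(x | lab x == l) \sum_(y | lab x == lab y)
      (v x)^* * v y * Qw p (ptw [set i0] x y) =
    \sum_(x | lab x == l) \sum_(y | lab y == l) (v x)^* * v y * Qw p (ptw [set i0] x y).
  apply: eq_bigr => x /eqP Hx; rewrite Hx.
  by apply: eq_big => [y|y Hy]; rewrite ?Hy // eq_sym.
rewrite E {E}.
case: (pickP (fun x => lab x == l)) => [z Hz | H0]; last first.
  by rewrite big_pred0.
case El : l Hz => [[a|] m] Hz.
-
  have key : forall x y, lab x == (Some a, m) -> lab y == (Some a, m) ->
      Qw p (ptw [set i0] x y) = Qw p z.
    move=> x y Hx Hy; apply: Qw_perm.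
    move: (labS Hx) (labS Hy) (labS Hz) => [ex nx cx] [ey ny cy] [ez nz cz].
    rewrite wseq_ptw1.
    have -> : wseq z = z i0 :: Xw z by [].
    rewrite ey ez.
    change [:: a; x i1; x i2; x i3] with (a :: Xw x).
    by rewrite perm_cons -cnt_eq ?cx ?cz.
  set S := \sum_(x | lab x == (Some a, m)) v x.
  have -> : \sum_(x | lab x == (Some a, m)) \sum_(y | lab y == (Some a, m))
      (v x)^* * v y * Qw p (ptw [set i0] x y) = S^* * S * Qw p z.
    rewrite rmorph_sum !mulr_suml; apply: eq_bigr => x Hx.
    rewrite mulr_sumr mulr_suml; apply: eq_bigr => y Hy.
    by rewrite key.
  by rewrite [S^* * S]mulrC; apply: mulr_ge0; [exact: mul_conjC_ge0 | exact: Qw_ge0].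
-
  have [Hz0 cz] := labN Hz.
  have sz : size (rem (z i0) (Xw z)) = 2%N by rewrite size_rem.
  have [s [t Ers]] : exists s t, rem (z i0) (Xw z) = [:: s; t].
    move: sz; case: (rem (z i0) (Xw z)) => [|s [|t [|]]] //= _.
    by exists s, t.
  have key2 : forall x y, lab x == (None, m) ->
      Qw p (ptw [set i0] x y) = Qw p (mkw (x i0) (y i0) s t).
    move=> x y Hx; have [Hx0 cx] := labN Hx; apply: Qw_perm.
    rewrite wseq_ptw1 wseq_mkw.
    change [:: y i0; x i1; x i2; x i3] with (y i0 :: Xw x).
    have P1 : perm_eq (y i0 :: Xw x) (y i0 :: x i0 :: rem (x i0) (Xw x)).
      by rewrite perm_cons perm_to_rem.
    have P2 : perm_eq (rem (x i0) (Xw x)) [:: s; t].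
      rewrite -Ers -cnt_eq ?cx ?cz //.
        exact: (leq_trans (size_rem_le _ _)).
      by rewrite Ers.
    by rewrite (permPl P1) (permPl (perm_swap2 _ _ _)) !perm_cons.
  under eq_bigr => x Hx do under eq_bigr => y _ do rewrite (key2 _ _ Hx) -mulrA.
  under eq_bigr => x Hx do rewrite -mulr_sumr (part_lin (fun y => lab y == (None, m)) (fun y => y i0) v (fun c => Qw p (mkw (x i0) c s t))).
  rewrite (part_lin (fun x => lab x == (None, m)) (fun x => x i0) (fun x => (v x)^*)
     (fun a => \sum_c (\sum_(y | (lab y == (None, m)) && (y i0 == c)) v y) * Qw p (mkw a c s t))).
  set Wv := fun a => \sum_(y | (lab y == (None, m)) && (y i0 == a)) v y.
  have := psd22 H22 s t Wv.
  congr (0 <= _); apply: eq_bigr => a _.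
  rewrite -rmorph_sum mulr_sumr; apply: eq_bigr => c _.
  by rewrite mulrA.
Qed.

End Main.

Lemma two_perm (A B : {set 'I_4}) : #|A| = 2%N -> #|B| = 2%N ->
  exists pi : {perm 'I_4}, forall a, (pi a \in B) = (a \in A).
Proof.
move=> /eqP/cards2P [a1 [a2 [n12 ->]]] /eqP/cards2P [b1 [b2 [m12 ->]]].
pose c := tperm a1 b1 a2.
have cb1 : c != b1.
  by rewrite /c -{2}(tpermL a1 b1) (inj_eq (@perm_inj _ _)) eq_sym.
set pi := (tperm a1 b1 * tperm c b2)%g.
exists pi => a.
have E1 : pi a1 = b1.
  by rewrite permM tpermL tpermD // eq_sym.
have E2 : pi a2 = b2.
  by rewrite permM -/c tpermL.
rewrite !inE.
have -> : (pi a == b1) = (a == a1) by rewrite -E1 (inj_eq (@perm_inj _ _)).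
have -> : (pi a == b2) = (a == a2) by rewrite -E2 (inj_eq (@perm_inj _ _)).
by [].
Qed.

Lemma one_perm (t t' : 'I_4) :
  exists pi : {perm 'I_4}, forall a, (pi a \in [set t']) = (a \in [set t]).
Proof.
exists (tperm t t') => a.
set pi := tperm t t'.
have E : pi t = t' by rewrite tpermL.
by rewrite !inE -E (inj_eq (@perm_inj _ _)).
Qed.

Unset Implicit Arguments.
Theorem lemma4 (C : numClosedFieldType) (d : nat) (hd : (2 <= d)%N)
  (p : occ d -> C)
  (p_ge0 : forall k, valid_occ k -> 0 <= p k)
  (p_sum : \sum_(k : occ d | valid_occ k) p k = 1)
  (S : {set 'I_4}) (hS : #|S| = 2%N)
  (hPT : psdmx (ptranspose S (diag_sym_state p))) :
  forall T : {set 'I_4}, T != set0 -> T != [set: 'I_4] ->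
    psdmx (ptranspose T (diag_sym_state p)).
Proof.
move=> T T0 TT.
have H2 : psdk (PTk p S) by apply/psd_pt.
have c01 : #|[set i0; i1]| = 2%N by rewrite cards2.
have H01 : psdk (PTk p [set i0; i1]).
  have [pi Hpi] := two_perm hS c01.
  exact: (psd_perm Hpi H2).
have H1 : psdk (PTk p [set i0]) by exact: psd13 p_ge0 H01.
have Hone : forall t, psdk (PTk p [set t]).
  move=> t; have [pi Hpi] := one_perm i0 t.
  exact: (psd_perm Hpi H1).
apply/psd_pt.
have le4 : (#|T| <= 4)%N by have := max_card (mem T); rewrite card_ord.
have n0 : #|T| != 0%N by rewrite cards_eq0.
have n4 : #|T| != 4%N.
  apply/negP => /eqP E; move/negP: TT; apply; rewrite eqEcard subsetT /=.
  by rewrite cardsT card_ord E.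
have hC : (#|T| + #|~: T| = 4)%N by rewrite cardsC card_ord.
have : [|| #|T| == 1%N, #|T| == 2%N | #|~: T| == 1%N] by lia.
case/or3P => [/cards1P [t ->] | /eqP c2 | /cards1P [t Et]].
- exact: Hone.
- have [pi Hpi] := two_perm hS c2.
  exact: (psd_perm Hpi H2).
- by rewrite -(setCK T) Et; apply: psd_compl.
Qed.
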